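(* Let $n\ge 1$, $A_0\in\mathbb{R}^{n\times n}$, $E_0\in\mathbb{R}^{n\times 1}$ and $C_0\in\mathbb{R}^{1\times n}$, and suppose the pair $(A_0,C_0)$ is observable. Then the following two statements are equivalent: (1) $\operatorname{rank}\begin{bmatrix} A_0-zI_n & E_0\\ C_0 & 0\end{bmatrix}=n+1$ for all $z\in\mathbb{C}$ (i.e., the triple $(A_0,E_0,C_0)$ has no invariant zeros); (2) $C_0E_0=0,\ C_0A_0E_0=0,\ \dots,\ C_0A_0^{n-2}E_0=0$ and $C_0A_0^{n-1}E_0\neq 0$.
   Context: These matrices describe the single-input single-output discrete-time system $x(k+1)=A_0x(k)+B_0u(k)+E_0f(k)$, $y(k)=C_0x(k)$, with state $x(k)\in\mathbb{R}^n$, known input $u(k)\in\mathbb{R}$, unknown scalar input (total disturbance) $f(k)\in\mathbb{R}$ and output $y(k)\in\mathbb{R}$. A number $z\in\mathbb{C}$ is an invariant zero of $(A_0,E_0,C_0)$ if $\operatorname{rank}\begin{bmatrix} A_0-zI_n & E_0\\ C_0 & 0\end{bmatrix}<n+1$. *)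

(* Defs.v *)
From HB Require Import structures.
From mathcomp Require Import all_boot all_order all_algebra.
From mathcomp Require Export complex.
Set Implicit Arguments. Unset Strict Implicit. Unset Printing Implicit Defensive.
Import Order.TTheory GRing.Theory Num.Theory.
Local Open Scope ring_scope.

Definition obs_mx (R : pzRingType) (n : nat) (A : 'M[R]_n) (C : 'M[R]_(1, n))
  : 'M[R]_(n, n) := \matrix_(i < n, j < n) (C *m A ^+ i) 0 j.

(* Kalman rank test: (A, C) observable iff the observability matrix has rank n. *)
Definition observable (R : fieldType) (n : nat) (A : 'M[R]_n) (C : 'M[R]_(1, n))
  : bool := \rank (obs_mx A C) == n.

Definition rosenbrock (R : rcfType) (n : nat) (A : 'M[R]_n) (E : 'M[R]_(n, 1))
  (C : 'M[R]_(1, n)) (z : R[i]) : 'M[R[i]]_(n + 1, n + 1) :=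
  block_mx (map_mx (real_complex R) A - z%:M) (map_mx (real_complex R) E)
           (map_mx (real_complex R) C) 0.

(* Main.v *)
Require Import Defs.
From HB Require Import structures.
From mathcomp Require Import all_boot all_order all_algebra.
From mathcomp Require Import complex.
From mathcomp Require Import zify perm.
Import Order.TTheory GRing.Theory Num.Theory.
Local Open Scope ring_scope.
Lemma size_prod_le2 (K : comNzRingType) (T : Type) (r : seq T) (F : T -> {poly K}) :
  (forall i, (size (F i) <= 2)%N) -> (size (\prod_(i <- r) F i)%R <= (size r).+1)%N.
Proof.
move=> HF; elim: r => [|x r IH]; first by rewrite big_nil size_poly1.
rewrite big_cons; apply: leq_trans (size_polyMleq _ _) _.
have := HF x; move: IH; rewrite /=.
move: (size (F x)) (size (\prod_(j <- r) F j)) => a b; case: a => //= a; lia.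
Qed.

Lemma size_det_le (K : comNzRingType) m (M : 'M[{poly K}]_m) :
  (forall i j, (size (M i j) <= 2)%N) -> (size (\det M)%R <= m.+1)%N.
Proof.
move=> HM; rewrite /determinant.
apply: leq_trans (size_sum _ _ _) _; apply/bigmax_leqP=> s _.
rewrite size_Msign.
have H := @size_prod_le2 K _ (index_enum (ordinal m)) (fun i => M i (s i)) (fun i => HM i (s i)). apply: leq_trans H _.
by rewrite [index_enum _]unlock -enumT size_enum_ord.
Qed.

Lemma bordered_det (K : idomainType) n (M : 'M[K]_n) (E : 'M[K]_(n,1)) (C : 'M[K]_(1,n)) :
  \det M != 0 -> \det (block_mx M E C 0) = - (C *m \adj M *m E) 0 0.
Proof.
move=> dM.
have H : block_mx 1%:M 0 (- (C *m \adj M)) (\det M)%:M *m block_mx M E C 0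
   = block_mx M E 0 (- (C *m \adj M *m E)).
  rewrite mulmx_block !mul1mx !mul0mx !addr0 mulmx0 addr0.
  rewrite mulNmx -[C *m \adj M *m M]mulmxA mul_adj_mx mul_mx_scalar mul_scalar_mx addrC subrr.
  by rewrite mulNmx.
have := congr1 determinant H; rewrite det_mulmx det_lblock det_ublock det1 mul1r.
rewrite det_scalar1 det_mx11 mxE => /mulfI; apply => //.
Qed.

Set Implicit Arguments. Unset Strict Implicit. Unset Printing Implicit Defensive.

Lemma entryZ (R : comNzRingType) m n (a : R) (M : 'M[R]_(m,n)) i j : (a *: M) i j = a * M i j.
Proof. by rewrite mxE. Qed.
Lemma entryD (R : comNzRingType) m n (M N : 'M[R]_(m,n)) i j : (M + N) i j = M i j + N i j.
Proof. by rewrite mxE. Qed.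
Lemma entry_map (R S : comNzRingType) (f : R -> S) m n (M : 'M[R]_(m,n)) i j : (map_mx f M) i j = f (M i j).
Proof. by rewrite mxE. Qed.

Definition Mp (K : fieldType) n (A : 'M[K]_n) : 'M[{poly K}]_n :=
  map_mx polyC A - 'X%:M.
Definition ww (K : fieldType) n (A : 'M[K]_n) (E : 'M[K]_(n,1)) :=
  \adj (Mp A) *m map_mx polyC E.
Definition qq (K : fieldType) n (A : 'M[K]_n) (E : 'M[K]_(n,1)) (C : 'M[K]_(1,n)) :=
  (map_mx polyC C *m ww A E) 0 0.
Definition rr (K : fieldType) n (A : 'M[K]_n) (E : 'M[K]_(n,1)) (C : 'M[K]_(1,n)) m :=
  (map_mx polyC (C *m A ^+ m) *m ww A E) 0 0.
Definition hh (K : fieldType) n (A : 'M[K]_n) (E : 'M[K]_(n,1)) (C : 'M[K]_(1,n)) m :=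
  (C *m A ^+ m *m E) 0 0.

Lemma size_dM (K : fieldType) n (A : 'M[K]_n) : size (\det (Mp A)) = n.+1.
Proof.
have -> : Mp A = (-1) *: char_poly_mx A by rewrite scaleN1r /Mp /char_poly_mx opprB.
by rewrite detZ size_Msign size_char_poly.
Qed.

Lemma size_Mp (K : fieldType) n (A : 'M[K]_n) i j : (size (Mp A i j) <= 2)%N.
Proof.
rewrite !mxE; apply: leq_trans (size_polyD _ _) _; rewrite size_polyN size_polyC.
case: (i == j) => /=; rewrite ?size_polyX ?size_poly0; case: (_ != 0) => //.
Qed.

Lemma size_ww (K : fieldType) n (A : 'M[K]_n) E i : (0 < n)%N ->
  (size (ww A E i 0%R) <= n)%N.
Proof.
move=> n0; rewrite !mxE; apply: leq_trans (size_sum _ _ _) _.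
apply/bigmax_leqP=> j _; rewrite mxE [in X in (size X <= _)%N]mxE mulrC mul_polyC.
apply: leq_trans (size_scale_leq _ _) _.
rewrite /cofactor size_Msign.
rewrite -[X in (_ <= X)%N](prednK n0); apply: size_det_le => a b.
by have := size_Mp A (lift j a) (lift i b); rewrite !mxE.
Qed.

Lemma size_rr (K : fieldType) n (A : 'M[K]_n) E C m : (0 < n)%N ->
  (size (rr A E C m) <= n)%N.
Proof.
move=> n0; rewrite /rr mxE; apply: leq_trans (size_sum _ _ _) _.
apply/bigmax_leqP=> j _; rewrite mxE mul_polyC.
apply: leq_trans (size_scale_leq _ _) _; exact: size_ww.
Qed.

Lemma rr_rec (K : fieldType) n (A : 'M[K]_n) E C m :
  'X * rr A E C m = rr A E C m.+1 - \det (Mp A) * (hh A E C m)%:P.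
Proof.
have H1 : Mp A *m ww A E = \det (Mp A) *: map_mx polyC E.
  by rewrite /ww mulmxA mul_mx_adj mul_scalar_mx.
have H2 : 'X *: ww A E = map_mx polyC A *m ww A E - \det (Mp A) *: map_mx polyC E.
  by rewrite -H1 /Mp mulmxBl mul_scalar_mx opprB addrC subrK.
have H3 : map_mx polyC A *m ww A E = 'X *: ww A E + \det (Mp A) *: map_mx polyC E.
  by rewrite H2 subrK.
have -> : rr A E C m.+1 = (map_mx polyC (C *m A ^+ m) *m (map_mx polyC A *m ww A E)) 0 0.
  by rewrite /rr exprSr mulmxA !map_mxM !mulmxA.
rewrite H3 mulmxDr -!scalemxAr entryD !entryZ.
rewrite -map_mxM entry_map /hh /rr addrK.
by [].
Qed.

Lemma qq_rr0 (K : fieldType) n (A : 'M[K]_n) E C : qq A E C = rr A E C 0.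
Proof. by rewrite /rr /qq expr0 mulmx1. Qed.

Lemma Xpow (K : fieldType) n (A : 'M[K]_n) E C m :
  (forall i, (i < m)%N -> hh A E C i = 0) -> 'X^m * qq A E C = rr A E C m.
Proof.
elim: m => [|m IH] H; first by rewrite expr0 mul1r qq_rr0.
rewrite exprS -mulrA IH; last by move=> i lt; apply: H; apply: ltnW.
by rewrite rr_rec H // mulr0 subr0.
Qed.

Lemma size_big (K : fieldType) n (A : 'M[K]_n) E C m : (0 < n)%N ->
  (forall i, (i < m)%N -> hh A E C i = 0) -> hh A E C m != 0 ->
  size ('X^(m.+1) * qq A E C) = n.+1.
Proof.
move=> n0 H hm; rewrite exprS -mulrA Xpow // rr_rec.
rewrite addrC size_polyDl size_polyN mulrC size_Cmul // size_dM //.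
by rewrite ltnS size_rr.
Qed.

Lemma key (K : fieldType) n (A : 'M[K]_n) E C : (0 < n)%N ->
  (size (qq A E C) == 1%N) <->
  ((forall k, (k < n - 1)%N -> hh A E C k = 0) /\ hh A E C (n - 1) != 0).
Proof.
move=> n0; split.
- move=> /eqP s1.
  have q0 : qq A E C != 0 by rewrite -size_poly_eq0 s1.
  have P : forall k, (k <= n - 1)%N -> forall i, (i < k)%N -> hh A E C i = 0.
    elim=> [|k IH] kn i; first by [].
    rewrite ltnS leq_eqVlt => /orP [/eqP ->|]; last by apply: IH; lia.
    apply/eqP; apply: contraTT isT => hk.
    have := size_big n0 (IH (ltnW kn)) hk.
    by rewrite mulrC size_mulXn // s1; lia.
  split; first by apply: P.
  apply: contraTneq isT => hz.
  have H : forall i, (i < n)%N -> hh A E C i = 0.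
    move=> i; rewrite leq_eqVlt => /orP [/eqP Ei|lt].
      by have -> : i = (n - 1)%N by lia.
    by apply: (P (n - 1)%N) => //; lia.
  have := size_rr A E C n n0; rewrite -(Xpow H) mulrC size_mulXn // s1; lia.
- move=> [H hn].
  have := size_big n0 H hn; rewrite subn1 prednK //.
  have [->|q0] := eqVneq (qq A E C) 0; first by rewrite mulr0 size_poly0.
  by rewrite mulrC size_mulXn // => /eqP; rewrite -addn1 eqn_add2l.
Qed.

Lemma map_mx_exp (R S : comNzRingType) (f : {rmorphism R -> S}) n (A : 'M[R]_n) k :
  map_mx f (A ^+ k) = (map_mx f A) ^+ k.
Proof.
elim: k => [|k IH]; first by rewrite !expr0 map_mx1.
by rewrite !exprS map_mxM IH.
Qed.

Lemma mx11_eq0 (R : comNzRingType) (X : 'M[R]_1) : (X == 0) = (X 0 0 == 0).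
Proof.
apply/eqP/eqP => [->|H]; first by rewrite mxE.
by apply/matrixP => i j; rewrite !ord1 H mxE.
Qed.

Lemma rank_iff (K : fieldType) n (A : 'M[K]_n) E C z :
  \rank (block_mx (A - z%:M) E C 0) = (n + 1)%N <-> (qq A E C).[z] != 0.
Proof.
have -> : block_mx (A - z%:M) E C 0 = map_mx (horner_eval z)
   (block_mx (Mp A) (map_mx polyC E) (map_mx polyC C) 0).
  rewrite map_block_mx map_mx0 /Mp map_mxB map_scalar_mx.
  have hc : forall m k (M : 'M[K]_(m,k)), map_mx (horner_eval z) (map_mx polyC M) = M.
    by move=> m k M; apply/matrixP => i j; rewrite !mxE horner_evalE hornerC.
  by rewrite !hc /= horner_evalE hornerX.
have dM : \det (Mp A) != 0 by rewrite -size_poly_eq0 size_dM.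
split.
- move=> /eqP; rewrite -[(n + 1)%N]/(n + 1)%N => Hr.
  have : row_free (map_mx (horner_eval z) (block_mx (Mp A) (map_mx polyC E) (map_mx polyC C) 0)) by [].
  rewrite row_free_unit unitmxE unitfE det_map_mx bordered_det // rmorphN oppr_eq0.
  by rewrite /qq /ww mulmxA => H; exact: H.
- move=> Hq; apply/eqP.
  change (row_free (map_mx (horner_eval z) (block_mx (Mp A) (map_mx polyC E) (map_mx polyC C) 0))).
  rewrite row_free_unit unitmxE unitfE det_map_mx bordered_det // rmorphN oppr_eq0.
  by move: Hq; rewrite /qq /ww mulmxA => H; exact: H.
Qed.

Unset Implicit Arguments.

Theorem lemma1 (R : rcfType) (n : nat) (A0 : 'M[R]_n) (E0 : 'M[R]_(n, 1))
  (C0 : 'M[R]_(1, n)) :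
  (0 < n)%N -> observable A0 C0 ->
  ((forall z : R[i], \rank (rosenbrock A0 E0 C0 z) = (n + 1)%N) <->
   ((forall k : nat, (k < n - 1)%N -> C0 *m A0 ^+ k *m E0 = 0) /\
    C0 *m A0 ^+ (n - 1) *m E0 != 0)).
Proof.
move=> n0 _.
pose Ak := map_mx (real_complex R) A0.
pose Ek := map_mx (real_complex R) E0.
pose Ck := map_mx (real_complex R) C0.
have Hr : forall z, \rank (rosenbrock A0 E0 C0 z) = (n + 1)%N <-> (qq Ak Ek Ck).[z] != 0.
  by move=> z; rewrite /rosenbrock; exact: rank_iff.
have Hh : forall k, (C0 *m A0 ^+ k *m E0 == 0) = (hh Ak Ek Ck k == 0).
  by move=> k; rewrite /hh /Ak /Ek /Ck -map_mx_exp -!map_mxM entry_map fmorph_eq0 mx11_eq0.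
split.
- move=> H1.
  have : size (qq Ak Ek Ck) == 1%N.
    apply/negPn/negP => /closed_rootP [z /rootP Hz].
    by have := (Hr z).1 (H1 z); rewrite Hz eqxx.
  move/(key Ak Ek Ck n0) => [Hk Hn]; split; last by rewrite Hh.
  by move=> k lt; apply/eqP; rewrite Hh; apply/eqP; exact: Hk.
- move=> [Hk Hn] z; apply/(Hr z).
  have Hs : size (qq Ak Ek Ck) == 1%N.
    apply/(key Ak Ek Ck n0); split; last by rewrite -Hh.
    by move=> k lt; apply/eqP; rewrite -Hh; apply/eqP; exact: Hk.
  apply/negP => /eqP Hz.
  have : size (qq Ak Ek Ck) != 1%N by apply/closed_rootP; exists z; apply/rootP.
  by rewrite Hs.
Qed.
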